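(* Let $n=2$. (1) Every final admissible word $\omega$ has the form $\omega=\tau*j_1^\infty*\mathsf{ext}*j_2^k*j_2^\infty*\mathsf{ext}$ with $\tau\in[2]^*$, $\{j_1,j_2\}=\{1,2\}$ and $k\ge0$. For such $\omega$ put $N_\omega:=e_{j_2}^TM_\omega$ (a row vector). Then (2) $N_\omega\ge0$ entrywise, its entries are coprime, and $N_\omega=e_i^T$ is possible only for $i=j_2$. (3) Modulo the equivalence relation on words generated by replacing a subword $j\,j^\infty$ by $j^\infty$ ($j\in\{1,2\}$), a final admissible word $\omega$ is uniquely determined by the pair $(N_\omega,j_1)$. (4) Conversely, for every row vector $N\in\mathbb{Z}^{1\times2}_{\ge0}$ with coprime entries and every $j_1\in\{1,2\}$ with $N\ne e_{j_1}^T$, there is a final admissible $\omega$ of the form in (1) with this $j_1$ such that $N_\omega=N$.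
   Context: Here $n=2$, $e_1,e_2$ standard basis of $\mathbb{Z}^2$. The alphabet is $L=\{1,2,1^\infty,2^\infty,\mathsf{ext}\}$ (each $j^\infty$ and $\mathsf{ext}$ is a single letter); $\varepsilon$ is the empty word, $*$ concatenation, $j^k$ denotes $k$ copies of the letter $j$. A finite word $\omega$ over $L$ is admissible if: (i) whenever $j^\infty$ occurs, the subsequent part of $\omega$ contains neither $j$ nor $j^\infty$; (ii) the only letter allowed directly after $j^\infty$ is $\mathsf{ext}$; (iii) every $\mathsf{ext}$ occurs directly after some $j^\infty$. It is final if it contains the subword $j^\infty\mathsf{ext}$ for every $j\in\{1,2\}$. $X(\omega)$ is the set of $j$ such that $j^\infty\mathsf{ext}$ is a subword of $\omega$, $Y(\omega)=\{1,2\}\setminus X(\omega)$. Define recursively $\delta^i_\omega$: $\delta^i_\varepsilon=e_i$; $\delta^i_{\omega*j^\infty}=\delta^i_{\omega*\mathsf{ext}}=\delta^i_\omega$; $\delta^i_{\omega*j}=\delta^i_\omega$ if $i\in X(\omega)\cup\{j\}$ and $\delta^i_{\omega*j}=\delta^i_\omega-\delta^j_\omega$ if $i\in Y(\omega)\setminus\{j\}$. Let $M_\omega=(\delta^1_\omega\ \delta^2_\omega)^{-1}$, the inverse of the matrix with columns $\delta^1_\omega,\delta^2_\omega$. *)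

(* Defs.v *)
From HB Require Import structures.
From mathcomp Require Import all_boot all_order all_algebra.
From Stdlib Require Import Relations.
Set Implicit Arguments. Unset Strict Implicit. Unset Printing Implicit Defensive.
Import Order.TTheory GRing.Theory Num.Theory.
Local Open Scope ring_scope.

(* Letters over L = {1,2,1^oo,2^oo,ext}, with index j : 'I_2
   (ord 0 stands for 1, ord 1 stands for 2).
   Encoded as option ('I_2 + 'I_2) to inherit a finType structure. *)
Definition letter := option ('I_2 + 'I_2)%type.
Definition Lt (j : 'I_2) : letter := Some (inl j).
Definition Linf (j : 'I_2) : letter := Some (inr j).
Definition Lext : letter := None.

Definition word := seq letter.

Definition is_plain (a : letter) : bool :=
  if a is Some (inl _) then true else false.

Definition admissible (w : word) : Prop :=
  (forall (u v : word) (j : 'I_2), w = u ++ Linf j :: v ->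
       (Lt j \notin v) && (Linf j \notin v))
  /\ (forall (u v : word) (j : 'I_2) (x : letter), w = u ++ Linf j :: x :: v ->
       x = Lext)
  /\ (forall (u v : word), w = u ++ Lext :: v ->
       exists (u' : word) (j : 'I_2), u = rcons u' (Linf j)).

Definition inX (w : word) (j : 'I_2) : bool := infix [:: Linf j; Lext] w.

Definition final (w : word) : Prop := forall j : 'I_2, inX w j.

(* The matrix (delta^1_w delta^2_w) whose i-th column is delta^i_w. *)
Definition delta_step (pre : word) (D : 'M[int]_2) (a : letter) : 'M[int]_2 :=
  match a with
  | Some (inl j) =>
      \matrix_(r < 2, i < 2)
        (if inX pre i || (i == j) then D r i else D r i - D r j)
  | _ => D
  end.

Fixpoint deltaM_aux (pre : word) (D : 'M[int]_2) (w : word) : 'M[int]_2 :=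
  match w with
  | [::] => D
  | a :: w' => deltaM_aux (rcons pre a) (delta_step pre D a) w'
  end.

Definition deltaM (w : word) : 'M[int]_2 := deltaM_aux [::] 1%:M w.

Definition Mw (w : word) : 'M[int]_2 := invmx (deltaM w).

Definition Nw (w : word) (j2 : 'I_2) : 'rV[int]_2 := row j2 (Mw w).

Definition eT (i : 'I_2) : 'rV[int]_2 := delta_mx 0 i.

Definition normal_form (tau : word) (j1 j2 : 'I_2) (k : nat) : word :=
  tau ++ [:: Linf j1; Lext] ++ nseq k (Lt j2) ++ [:: Linf j2; Lext].

Definition red_step (w w' : word) : Prop :=
  exists (u v : word) (j : 'I_2),
    w = u ++ Lt j :: Linf j :: v /\ w' = u ++ Linf j :: v.

Definition word_equiv : word -> word -> Prop := clos_refl_sym_trans word red_step.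

(* Main.v *)
Require Import Defs.
From HB Require Import structures.
From mathcomp Require Import all_boot all_order all_algebra.
From Stdlib Require Import Relations.
From mathcomp Require Import zify.
Import Order.TTheory GRing.Theory Num.Theory.
Set Implicit Arguments. Unset Strict Implicit.
Local Open Scope ring_scope.

Lemma ord2E (j : 'I_2) : j = ord0 \/ j = ord_max.
Proof. case: j => [[|[|m]] Hm]; [left|right|] => //; exact: val_inj. Qed.

Lemma ord2_other (j1 j2 j : 'I_2) : j1 != j2 -> j = j1 \/ j = j2.
Proof.
case: (ord2E j1) => ->; case: (ord2E j2) => -> //; case: (ord2E j) => ->; auto.
Qed.

Lemma split_first (x : letter) (A C u v : word) :
  x \notin A -> u ++ x :: v = A ++ x :: C ->
  (u = A /\ v = C) \/ (exists u2, u = A ++ x :: u2 /\ u2 ++ x :: v = C).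
Proof.
elim: A u => [|a A IH] [|y u] //=.
- by move=> _ [->]; left.
- by move=> _ [-> <-]; right; exists u.
- by rewrite in_cons => /norP [/eqP ne _] [/ne].
- rewrite in_cons => /norP [_ nA] [-> e].
  case: (IH _ nA e) => [[-> ->]|[u2 [-> e2]]]; [left|right] => //.
  by exists u2.
Qed.

Lemma notin_after w u v j : admissible w -> w = u ++ Linf j :: v ->
  (Lt j \notin v) /\ (Linf j \notin v).
Proof. by case=> H _ e; apply/andP; apply: H e. Qed.

Lemma notin_before w u v j : admissible w -> w = u ++ Linf j :: v ->
  Linf j \notin u.
Proof.
move=> Ha e; apply/negP => Hu; move: Hu e => /splitPr [a b].
rewrite -catA cat_cons => e.
have [_ ] := notin_after Ha e.
by rewrite mem_cat mem_head orbT.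
Qed.

Lemma plain_cases (x : letter) : is_plain x -> exists j, x = Lt j.
Proof. by case: x => [[j|j]|] //= _; exists j. Qed.

Lemma letter_cases (j1 j2 : 'I_2) (x : letter) : j1 != j2 ->
  x = Lext \/ x = Lt j1 \/ x = Lt j2 \/ x = Linf j1 \/ x = Linf j2.
Proof.
move=> ne; case: x => [[j|j]|]; [| |by left];
  case: (ord2_other j ne) => ->; tauto.
Qed.

Lemma ext_before w u v : admissible w -> w = u ++ Lext :: v ->
  exists u' j, u = rcons u' (Linf j).
Proof. by case=> _ [_ H]; apply: H. Qed.

Lemma rcons_eq_last (s t : word) x y : rcons s x = rcons t y -> x = y.
Proof. by move/rcons_inj => [_ ->]. Qed.

Lemma shape1 w j1 j2 u v p q : admissible w -> j1 != j2 ->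
  w = u ++ Linf j1 :: Lext :: v -> w = p ++ Linf j2 :: Lext :: q ->
  Linf j2 \in v ->
  exists tau k, all is_plain tau /\ w = normal_form tau j1 j2 k.
Proof.
move=> Ha ne e1 e2 Hv; case/splitPr: Hv e1 => [a b] e1.
have np := notin_before Ha e2.
have [na1 na2] := notin_after Ha e2.
have [nv1 nv2] := notin_after Ha e1.
have nu := notin_before Ha e1.
have e3 : w = (u ++ Linf j1 :: Lext :: a) ++ Linf j2 :: b.
  by rewrite e1 -catA.
have := split_first np (etrans (esym e3) e2).
case => [[ep eb]|[u2 [_ e4]]]; last first.
  by move: na2; rewrite -e4 mem_cat mem_head orbT.
subst b.
have npu : Linf j2 \notin u by move: np; rewrite -ep mem_cat negb_or => /andP[].
have npa : Linf j2 \notin a.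
  by move: np; rewrite -ep !(mem_cat, in_cons, negb_or) => /and4P[].
have eq0 : q = [::].
  case: q e1 e2 e3 na1 na2 nv1 nv2 => [//|x q'] e1 e2 e3 na1 na2 nv1 nv2.
  exfalso.
  have xL : x = Lext.
    case: (letter_cases x ne) => [//|[?|[?|[?|?]]]]; subst x.
    - by move: nv1; rewrite !(in_cons, mem_cat, eqxx, orbT, orTb).
    - by move: na1; rewrite !(in_cons, mem_cat, eqxx, orbT, orTb).
    - by move: nv2; rewrite !(in_cons, mem_cat, eqxx, orbT, orTb).
    - by move: na2; rewrite !(in_cons, mem_cat, eqxx, orbT, orTb).
  subst x.
  have e5 : w = rcons (u ++ Linf j1 :: Lext :: a ++ [:: Linf j2]) Lext ++ Lext :: q'.
    by rewrite e1 -cats1 -!catA /= -!catA.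
  have [u' [j e6]] := ext_before Ha e5.
  by have := rcons_eq_last e6.
subst q.
have aP : all (pred1 (Lt j2)) a.
  apply/allP => x xa /=.
  have nxL : x != Lext.
    apply/negP => /eqP xL; subst x.
    case/splitPr: xa nv1 nv2 npa e1 => [a1 a2] nv1 nv2 npa e1.
    have e5 : w = (u ++ Linf j1 :: Lext :: a1) ++ Lext :: (a2 ++ [:: Linf j2; Lext]).
      by rewrite e1 -!catA.
    have [u' [j e6]] := ext_before Ha e5.
    clear e5 e1 nv1; case/lastP: a1 e6 nv2 npa => [|a1 y] e6 nv2 npa.
      have ee : u ++ [:: Linf j1; Lext] = rcons (u ++ [:: Linf j1]) Lext.
        by rewrite -cats1 -catA.
      by move: e6; rewrite ee => /rcons_eq_last.
    have ee : u ++ Linf j1 :: Lext :: rcons a1 y = rcons (u ++ Linf j1 :: Lext :: a1) y.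
      by rewrite rcons_cat.
    move: e6; rewrite ee => /rcons_eq_last yj; subst y.
    case: (ord2_other j ne) => ?; subst j.
    + by move: nv2; rewrite !(in_cons, mem_cat, mem_rcons, eqxx, orbT, orTb).
    + by move: npa; rewrite !(in_cons, mem_cat, mem_rcons, eqxx, orbT, orTb).
  case: (letter_cases x ne) => [?|[?|[?|[?|?]]]]; subst x => //.
  - by move: nv1; rewrite !(in_cons, mem_cat, xa, orbT, orTb).
  - by move: nv2; rewrite !(in_cons, mem_cat, xa, orbT, orTb).
  - by rewrite xa in npa.
have uP : all is_plain u.
  apply/allP => x xu.
  have nxL : x != Lext.
    apply/negP => /eqP xL; subst x.
    case/splitPr: xu nu npu e1 => [u1 u2] nu npu e1.
    have e5 : w = u1 ++ Lext :: (u2 ++ Linf j1 :: Lext :: a ++ [:: Linf j2; Lext]).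
      by rewrite e1 -catA.
    have [u' [j e6]] := ext_before Ha e5.
    subst u1.
    case: (ord2_other j ne) => ?; subst j.
    + by move: nu; rewrite !(in_cons, mem_cat, mem_rcons, eqxx, orbT, orTb).
    + by move: npu; rewrite !(in_cons, mem_cat, mem_rcons, eqxx, orbT, orTb).
  case: (letter_cases x ne) => [?|[?|[?|[?|?]]]]; subst x => //.
  - by rewrite xu in nu.
  - by rewrite xu in npu.
exists u, (size a); split => //.
by rewrite e1 /normal_form -(all_pred1P _ _ aP).
Qed.

Lemma part1 (w : word) : admissible w -> final w ->
     exists (tau : word) (j1 j2 : 'I_2) (k : nat),
       all is_plain tau /\ j1 != j2 /\ w = normal_form tau j1 j2 k.
Proof.
move=> Ha Hf.
have [u0 [v0 e0]] := infixP (Hf ord0).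
have [u1 [v1 e1]] := infixP (Hf ord_max).
rewrite /= in e0 e1.
have ne : (ord0 : 'I_2) != ord_max by [].
have : Linf ord_max \in w by rewrite e1 mem_cat mem_head orbT.
rewrite {1}e0 !(mem_cat, in_cons) => /or4P [inu|//|//|inv].
- have inv1 : Linf ord0 \in v1.
    case/splitPr: inu e0 => [a b] e0.
    have np := notin_before Ha e1.
    have e2 : w = a ++ Linf ord_max :: (b ++ Linf ord0 :: Lext :: v0).
      by rewrite e0 -catA.
    case: (split_first np (etrans (esym e2) e1)) => [[_ eb]|[u2 [ea _]]].
    + case: b eb {e2 e0} => [|y b] [] // _ <-.
      by rewrite mem_cat mem_head orbT.
    + have := notin_before Ha e2.
      by rewrite ea mem_cat mem_head orbT.
  have ne' : (ord_max : 'I_2) != ord0 by [].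
  have [tau [k [H1 H2]]] := shape1 Ha ne' e1 e0 inv1.
  by exists tau, ord_max, ord0, k.
- have [tau [k [H1 H2]]] := shape1 Ha ne e0 e1 inv.
  by exists tau, ord0, ord_max, k.
Qed.

Definition Einv (a : 'I_2) : 'M[int]_2 :=
  \matrix_(r, i) (if (r == i) || (r == a) then 1 else 0).
Definition Em (a : 'I_2) : 'M[int]_2 :=
  \matrix_(r, i) (if r == i then 1 else if r == a then -1 else 0).

Lemma sum2 (F : 'I_2 -> int) : \sum_(k < 2) F k = F ord0 + F ord_max.
Proof. rewrite big_ord_recl big_ord1; congr (_ + F _); exact: val_inj. Qed.

Lemma E_Einv a : Em a *m Einv a = 1%:M.
Proof.
apply/matrixP => r i; rewrite !mxE sum2 !mxE.
by case: (ord2E a) => ->; case: (ord2E r) => ->; case: (ord2E i) => ->.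
Qed.

Lemma plain_noX (pre : word) j : all is_plain pre -> inX pre j = false.
Proof.
move=> Hp; apply/negP => /mem_infix H.
by have /(allP Hp) := H (Linf j) (mem_head _ _).
Qed.

Lemma step_plain pre D a : all is_plain pre ->
  delta_step pre D (Lt a) = D *m Em a.
Proof.
move=> Hp; apply/matrixP => r i; rewrite /= !mxE sum2 !mxE plain_noX //=.
case: (ord2E a) => ->; case: (ord2E i) => -> /=. all: rewrite ?mulr1 ?mulr0 ?addr0 ?add0r ?mulrN1. all: first [done | by rewrite addrC].
Qed.

Fixpoint Qf (t : word) : 'M[int]_2 :=
  match t with
  | [::] => 1%:M
  | Some (inl a) :: t' => Qf t' *m Einv a
  | _ :: t' => Qf t'
  end.

Lemma aux_plain pre D t : all is_plain pre -> all is_plain t ->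
  deltaM_aux pre D t *m Qf t = D.
Proof.
elim: t pre D => [|x t IH] pre D Hp; first by rewrite /= mulmx1.
case: x => [[a|a]|] // /andP [_ Ht].
have -> : deltaM_aux pre D (Lt a :: t) = deltaM_aux (rcons pre (Lt a)) (D *m Em a) t.
  by rewrite -(step_plain D a Hp).
rewrite [Qf _]/= mulmxA IH ?all_rcons ?Hp //.
by rewrite -mulmxA E_Einv mulmx1.
Qed.

Lemma aux_cat pre D s t :
  deltaM_aux pre D (s ++ t) = deltaM_aux (pre ++ s) (deltaM_aux pre D s) t.
Proof.
elim: s pre D => [|x s IH] pre D /=; first by rewrite cats0.
by rewrite IH cat_rcons.
Qed.



Lemma aux_cons pre D x w :
  deltaM_aux pre D (x :: w) = deltaM_aux (rcons pre x) (delta_step pre D x) w.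
Proof. by []. Qed.

Lemma aux_tail pre D (j1 j2 : 'I_2) k : j1 != j2 -> inX pre j1 ->
  deltaM_aux pre D (nseq k (Lt j2) ++ [:: Linf j2; Lext]) = D.
Proof.
move=> ne; elim: k pre => [|k IH] pre Hx; first by [].
rewrite aux_cons.
have -> : delta_step pre D (Lt j2) = D.
  apply/matrixP => r i; rewrite /= !mxE.
  by case: (ord2_other i ne) => ->; rewrite ?Hx ?eqxx ?orbT.
apply: IH; rewrite /inX -cats1; exact: infix_catr.
Qed.

Lemma deltaM_nf tau j1 j2 k : all is_plain tau -> j1 != j2 ->
  deltaM (normal_form tau j1 j2 k) = deltaM_aux [::] 1%:M tau.
Proof.
move=> Ht ne; rewrite /deltaM /normal_form aux_cat /=.
apply: aux_tail; first exact: ne.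
by rewrite /inX -!cats1 -catA; apply: suffix_infix.
Qed.

Lemma invmx_right (A B : 'M[int]_2) : A *m B = 1%:M -> invmx A = B.
Proof.
move=> e; have [uA _] := mulmx1_unit e.
by rewrite -[invmx A]mulmx1 -e mulmxA mulVmx // mul1mx.
Qed.

Lemma Mw_nf tau j1 j2 k : all is_plain tau -> j1 != j2 ->
  Mw (normal_form tau j1 j2 k) = Qf tau.
Proof.
move=> Ht ne; rewrite /Mw deltaM_nf //; apply: invmx_right.
exact: aux_plain.
Qed.

Definition stepn (a : 'I_2) (p : nat * nat) : nat * nat :=
  if a == ord0 then (p.1, p.1 + p.2)%N else (p.1 + p.2, p.2)%N.

Fixpoint fn (b : nat * nat) (t : word) : nat * nat :=
  match t with
  | [::] => b
  | Some (inl a) :: t' => stepn a (fn b t')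
  | _ :: t' => fn b t'
  end.

Definition ent (p : nat * nat) (c : 'I_2) : nat := if c == ord0 then p.1 else p.2.
Definition base (j : 'I_2) : nat * nat := (nat_of_bool (j == ord0), nat_of_bool (j == ord_max)).

Lemma row_fn j2 t c : row j2 (Qf t) 0 c = (ent (fn (base j2) t) c)%:Z.
Proof.
elim: t c => [|x t IH] c /=.
  rewrite !mxE /ent /base.
  by case: (ord2E j2) => ->; case: (ord2E c) => ->.
case: x => [[a|a]|] //=.
rewrite row_mul !mxE sum2 !IH !mxE /stepn /ent.
by case: (ord2E a) => ->; case: (ord2E c) => -> /=; rewrite ?mulr1 ?mulr0 ?addr0 ?add0r ?PoszD.
Qed.

Lemma fn_inv j2 t : all is_plain t ->
  coprime (fn (base j2) t).1 (fn (base j2) t).2 /\ (0 < ent (fn (base j2) t) j2)%N.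
Proof.
elim: t => [|x t IH] /=.
  by rewrite /base /ent; case: (ord2E j2) => ->.
case: x => [[a|a]|] //= /IH [].
case: (fn _ t) => c d /= Hc He.
rewrite /stepn /ent; case: (ord2E a) => -> /=; split.
- by rewrite /coprime gcdnDl.
- move: He; rewrite /ent; case: (j2 == ord0) => /=; lia.
- by rewrite /coprime gcdnC gcdnDr gcdnC.
- move: He; rewrite /ent; case: (j2 == ord0) => /=; lia.
Qed.

Lemma Nw_ent tau j1 j2 k c : all is_plain tau -> j1 != j2 ->
  Nw (normal_form tau j1 j2 k) j2 0 c = (ent (fn (base j2) tau) c)%:Z.
Proof. by move=> Ht ne; rewrite /Nw Mw_nf // row_fn. Qed.

Lemma part2 (tau : word) (j1 j2 : 'I_2) (k : nat) :
     let w := normal_form tau j1 j2 k in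
     all is_plain tau -> j1 != j2 ->
       (forall c : 'I_2, 0 <= Nw w j2 0 c)
       /\ coprimez (Nw w j2 0 0) (Nw w j2 0 1)
       /\ (forall i : 'I_2, Nw w j2 = eT i -> i = j2).
Proof.
move=> w Ht ne; have [Hc He] := fn_inv j2 Ht.
split; [|split].
- by move=> c; rewrite /w Nw_ent.
- by rewrite /w !Nw_ent.
- move=> i /rowP /(_ j2); rewrite /w Nw_ent // /eT mxE.
  case: (eqVneq i j2) => [//|nij] /=.
  by move=> [e]; rewrite e in He.
Qed.

Lemma fn_base j1 j2 t : j1 != j2 -> all is_plain t ->
  fn (base j2) t = base j2 -> t = nseq (size t) (Lt j1).
Proof.
move=> ne; elim: t => [//|x t IH] /=.
case: x => [[a|a]|] //= Ht.
have [_ He] := fn_inv j2 Ht.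
move: IH He; case: (fn _ t) => c d /= IH He.
rewrite /stepn.
move: ne; case: (ord2E j1) => ?; case: (ord2E j2) => ?; subst j1 j2 => // _;
  case: (ord2E a) => ?; subst a; rewrite /base /ent /= in He IH * => -[] e1 e2.
all: try (exfalso; lia).
all: rewrite (IH Ht); [by rewrite size_nseq | congr pair; lia].
Qed.

Lemma stepn_inj j2 a b p p' : (0 < ent p j2)%N -> (0 < ent p' j2)%N ->
  stepn a p = stepn b p' -> a = b /\ p = p'.
Proof.
case: p => c d; case: p' => c' d'; rewrite /stepn /ent /=.
case: (ord2E j2) => ?; case: (ord2E a) => ?; case: (ord2E b) => ?; subst => /= H1 H2 [] e1 e2;
  (split; [done | congr pair; lia]) || (exfalso; lia).
Qed.

Lemma fn_inj j1 j2 t t' : j1 != j2 -> all is_plain t -> all is_plain t' ->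
  fn (base j2) t = fn (base j2) t' ->
  exists s m m', t = s ++ nseq m (Lt j1) /\ t' = s ++ nseq m' (Lt j1).
Proof.
move=> ne; elim: t t' => [|x t IH] t' Ht Ht' e.
  exists [::], 0%N, (size t'); split => //.
  exact: (fn_base ne Ht' (esym e)).
case: t' Ht' e => [|y t'] Ht' e.
  exists [::], (size (x :: t)), 0%N; split => //.
  exact: (fn_base ne Ht e).
case: x Ht e => [[a|a]|] //= Ht; case: y Ht' => [[b|b]|] //= Ht' e.
have [_ He] := fn_inv j2 Ht; have [_ He'] := fn_inv j2 Ht'.
have [eab ep] := stepn_inj He He' e; subst b.
have [s [m [m' [e1 e2]]]] := IH _ Ht Ht' ep.
by exists (Lt a :: s), m, m'; rewrite e1 e2.
Qed.

Lemma nseqSr (x : letter) k : nseq k.+1 x = rcons (nseq k x) x.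
Proof. by elim: k => //= k <-. Qed.

Lemma red_k tau j1 j2 k :
  word_equiv (normal_form tau j1 j2 k) (normal_form tau j1 j2 0).
Proof.
elim: k => [|k IH]; first exact: rst_refl.
apply: rst_trans IH; apply: rst_step.
exists (tau ++ [:: Linf j1; Lext] ++ nseq k (Lt j2)), [:: Lext], j2; split.
  by rewrite /normal_form nseqSr -cats1 -!catA.
by rewrite /normal_form -!catA.
Qed.

Lemma red_m s m j1 j2 :
  word_equiv (normal_form (s ++ nseq m (Lt j1)) j1 j2 0) (normal_form s j1 j2 0).
Proof.
elim: m => [|m IH]; first by rewrite cats0; exact: rst_refl.
apply: rst_trans IH; apply: rst_step.
exists (s ++ nseq m (Lt j1)), [:: Lext; Linf j2; Lext], j1; split.
  by rewrite /normal_form nseqSr -cats1 -!catA.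
by rewrite /normal_form -!catA.
Qed.

Lemma part3 (tau tau' : word) (j1 j2 j2' : 'I_2) (k k' : nat) :
     let w := normal_form tau j1 j2 k in
     let w' := normal_form tau' j1 j2' k' in
     all is_plain tau -> j1 != j2 -> admissible w -> final w ->
     all is_plain tau' -> j1 != j2' -> admissible w' -> final w' ->
     Nw w j2 = Nw w' j2' -> word_equiv w w'.
Proof.
move=> w w' Ht ne _ _ Ht' ne' _ _ e.
have ej : j2' = j2.
  case: (ord2_other j2' ne) => // ej; by rewrite ej eqxx in ne'.
subst j2'.
have ep : fn (base j2) tau = fn (base j2) tau'.
  have e0 := congr1 (fun M : 'rV_2 => M 0 ord0) e.
  have e1 := congr1 (fun M : 'rV_2 => M 0 ord_max) e.
  rewrite /= /w /w' !Nw_ent // /ent /= in e0 e1.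
  case: (fn _ tau) e0 e1 => c d; case: (fn _ tau') => c' d' /= [->] [->] //.
have [s [m [m' [e1 e2]]]] := fn_inj ne Ht Ht' ep.
apply: rst_trans (red_k _ _ _ _) _.
apply: rst_sym; apply: rst_trans (red_k _ _ _ _) _.
rewrite e1 e2; apply: rst_trans (red_m _ _ _ _) _.
apply: rst_sym; exact: red_m.
Qed.

Lemma exist_fn j2 n c d : (c + d <= n)%N -> coprime c d -> (0 < ent (c, d) j2)%N ->
  exists t, all is_plain t /\ fn (base j2) t = (c, d).
Proof.
elim: n c d => [|n IH] c d Hn Hcop He.
  have [c0 d0] : c = 0%N /\ d = 0%N by lia.
  by subst; move: Hcop; rewrite /coprime gcd0n.
case: (posnP c) => [c0|cp].
  subst c; move: Hcop; rewrite /coprime gcd0n => /eqP d1; subst d.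
  exists [::]; split => //; move: He; rewrite /ent /base.
  by case: (ord2E j2) => ->.
case: (posnP d) => [d0|dp].
  subst d; move: Hcop; rewrite /coprime gcdn0 => /eqP c1; subst c.
  exists [::]; split => //; move: He; rewrite /ent /base.
  by case: (ord2E j2) => ->.
case: (ltngtP c d) => [lt|gt|eq].
- have h1 : (c + (d - c) <= n)%N by lia.
  have ed : d = (c + (d - c))%N by lia.
  have h2 : coprime c (d - c) by move: Hcop; rewrite /coprime {1}ed gcdnDl.
  have h3 : (0 < ent (c, d - c) j2)%N.
    by move: He; rewrite /ent /=; case: (_ == _) => /=; lia.
  have [t [Ht e]] := IH c (d - c)%N h1 h2 h3.
  exists (Lt ord0 :: t); split => //=; rewrite e /stepn /=; congr pair; lia.
- have h1 : (c - d + d <= n)%N by lia.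
  have ec : c = (c - d + d)%N by lia.
  have h2 : coprime (c - d) d.
    by move: Hcop; rewrite /coprime {1}ec gcdnC gcdnDr gcdnC.
  have h3 : (0 < ent (c - d, d) j2)%N.
    by move: He; rewrite /ent /=; case: (_ == _) => /=; lia.
  have [t [Ht e]] := IH (c - d)%N d h1 h2 h3.
  exists (Lt ord_max :: t); split => //=; rewrite e /stepn /=; congr pair; lia.
- subst d; move: Hcop; rewrite /coprime gcdnn => /eqP c1; subst c.
  exists [:: Lt j2]; split => //=.
  by rewrite /stepn /base; case: (ord2E j2) => ->.
Qed.

Lemma plain_notin (s : word) x : all is_plain s -> ~~ is_plain x -> x \notin s.
Proof. by move=> Hs Hx; apply/negP => /(allP Hs); rewrite (negbTE Hx). Qed.

Lemma eqLinf (j k : 'I_2) : (Linf j == Linf k) = (j == k). Proof. by []. Qed.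
Lemma eqLt (j k : 'I_2) : (Lt j == Lt k) = (j == k). Proof. by []. Qed.
Lemma eqLinfLt (j k : 'I_2) : (Linf j == Lt k) = false. Proof. by []. Qed.
Lemma eqLtLinf (j k : 'I_2) : (Lt j == Linf k) = false. Proof. by []. Qed.
Lemma eqLinfE (j : 'I_2) : (Linf j == Lext) = false. Proof. by []. Qed.
Lemma eqLtE (j : 'I_2) : (Lt j == Lext) = false. Proof. by []. Qed.
Lemma eqELt (j : 'I_2) : (Lext == Lt j) = false. Proof. by []. Qed.
Lemma eqELinf (j : 'I_2) : (Lext == Linf j) = false. Proof. by []. Qed.

Lemma nf_adm tau j1 j2 k : all is_plain tau -> j1 != j2 ->
  admissible (normal_form tau j1 j2 k) /\ final (normal_form tau j1 j2 k).
Proof.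
move=> Ht ne.
set R1 := Lext :: nseq k (Lt j2) ++ [:: Linf j2; Lext].
set A2 := tau ++ Linf j1 :: Lext :: nseq k (Lt j2).
have E1 : normal_form tau j1 j2 k = tau ++ Linf j1 :: R1 by [].
have E2 : normal_form tau j1 j2 k = A2 ++ Linf j2 :: [:: Lext].
  by rewrite /normal_form /A2 -!catA.
have n1 : Linf j1 \notin tau by apply: plain_notin.
have n2 : Linf j2 \notin A2.
  have nt : (Linf j2 \in tau) = false by apply/negbTE/plain_notin.
  by rewrite /A2 mem_cat !in_cons mem_nseq eqLinf eqLinfE eqLinfLt nt eq_sym (negbTE ne) andbF.

have r1a : Lt j1 \notin R1.
  by rewrite /R1 in_cons mem_cat mem_nseq !in_cons eqLt eqLtE eqLtLinf (negbTE ne) andbF.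
have r1b : Linf j1 \notin R1.
  by rewrite /R1 in_cons mem_cat mem_nseq !in_cons eqLinf eqLinfE eqLinfLt (negbTE ne) andbF.
have loc : forall u v j, normal_form tau j1 j2 k = u ++ Linf j :: v ->
    (j = j1 /\ v = R1) \/ (j = j2 /\ v = [:: Lext]).
  move=> u v j e; case: (ord2_other j ne) => ?; subst j.
  - left; split => //.
    case: (split_first n1 (etrans (esym e) E1)) => [[_ ->]//|[u2 [_ e2]]].
    by move: r1b; rewrite -e2 mem_cat mem_head orbT.
  - right; split => //.
    case: (split_first n2 (etrans (esym e) E2)) => [[_ ->]//|[u2 [_ e2]]].
    by case: u2 e2 => [|? []].
split; last first.
  move=> j; rewrite /inX; case: (ord2_other j ne) => ->.
  - by rewrite /normal_form; apply: infix_infix.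
  - by rewrite E2; apply: suffix_infix.
split; [|split].
- move=> u v j e; case: (loc _ _ _ e) => [[-> ->]|[-> ->]].
  + by rewrite r1a r1b.
  + by rewrite !in_cons eqLtE eqLinfE in_nil.
- move=> u v j x e; case: (loc _ _ _ e) => [[_ [->]]|[_ [->]]] //.
- move=> u v e.
  have E3 : normal_form tau j1 j2 k =
      (tau ++ [:: Linf j1]) ++ Lext :: (rcons (nseq k (Lt j2)) (Linf j2) ++ Lext :: [::]).
    by rewrite /normal_form -cats1 -!catA.
  have n3 : Lext \notin tau ++ [:: Linf j1].
    by rewrite mem_cat negb_or plain_notin.
  case: (split_first n3 (etrans (esym e) E3)) => [[-> _]|[u2 [eu e2]]].
    by exists tau, j1; rewrite cats1.
  have n4 : Lext \notin rcons (nseq k (Lt j2)) (Linf j2).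
    by rewrite mem_rcons in_cons negb_or /= mem_nseq andbF.
  case: (split_first n4 e2) => [[eu2 _]|[u3 [_ e3]]]; last by case: u3 e3 => [|? []].
  exists (tau ++ Linf j1 :: Lext :: nseq k (Lt j2)), j2.
  by rewrite eu eu2 rcons_cat -catA.
Qed.

Lemma part4 (N : 'rV[int]_2) (j1 : 'I_2) :
     (forall c : 'I_2, 0 <= N 0 c) -> coprimez (N 0 0) (N 0 1) ->
     N != eT j1 ->
     exists (tau : word) (j2 : 'I_2) (k : nat),
       let w := normal_form tau j1 j2 k in
       all is_plain tau /\ j1 != j2 /\ admissible w /\ final w /\ Nw w j2 = N.
Proof.
move=> Hpos Hcop HN.
have z0 : (0 : 'I_2) = ord0 by apply: val_inj.
have z1 : (1 : 'I_2) = ord_max by apply: val_inj.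
rewrite z0 z1 in Hcop.
set j2 : 'I_2 := if j1 == ord0 then ord_max else ord0.
have ne : j1 != j2 by rewrite /j2; case: (ord2E j1) => ->.
set c := absz (N 0 ord0); set d := absz (N 0 ord_max).
have Nc : N 0 ord0 = c%:Z by rewrite /c gez0_abs.
have Nd : N 0 ord_max = d%:Z by rewrite /d gez0_abs.
have cop : coprime c d by move: Hcop; rewrite coprimezE.
have He : (0 < ent (c, d) j2)%N.
  rewrite /ent /j2; case: (ord2E j1) HN => -> HN /=.
  - case: (posnP d) => // d0; exfalso; move/negP: HN; apply.
    move: cop; rewrite d0 /coprime gcdn0 => /eqP c1.
    apply/eqP/rowP => x; rewrite /eT mxE; case: (ord2E x) => ->.
    + by rewrite Nc c1.
    + by rewrite Nd d0.
  - case: (posnP c) => // c0; exfalso; move/negP: HN; apply.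
    move: cop; rewrite c0 /coprime gcd0n => /eqP d1.
    apply/eqP/rowP => x; rewrite /eT mxE; case: (ord2E x) => ->.
    + by rewrite Nc c0.
    + by rewrite Nd d1.
have [t [Ht et]] := exist_fn (leqnn (c + d)) cop He.
exists t, j2, 0%N => w.
have [Ha Hf] := nf_adm 0 Ht ne.
do 4!split => //.
apply/rowP => x; rewrite /w Nw_ent // et; case: (ord2E x) => ->.
- by rewrite Nc.
- by rewrite Nd.
Qed.

Theorem mainTheorem14 :
  (* (1) shape of final admissible words *)
  (forall w : word, admissible w -> final w ->
     exists (tau : word) (j1 j2 : 'I_2) (k : nat),
       all is_plain tau /\ j1 != j2 /\ w = normal_form tau j1 j2 k)
  /\
  (* (2) properties of N_w *)
  (forall (tau : word) (j1 j2 : 'I_2) (k : nat),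
     let w := normal_form tau j1 j2 k in
     all is_plain tau -> j1 != j2 -> admissible w -> final w ->
       (forall c : 'I_2, 0 <= Nw w j2 0 c)
       /\ coprimez (Nw w j2 0 0) (Nw w j2 0 1)
       /\ (forall i : 'I_2, Nw w j2 = eT i -> i = j2))
  /\
  (* (3) uniqueness modulo the equivalence generated by  j j^oo ~> j^oo *)
  (forall (tau tau' : word) (j1 j2 j2' : 'I_2) (k k' : nat),
     let w := normal_form tau j1 j2 k in
     let w' := normal_form tau' j1 j2' k' in
     all is_plain tau -> j1 != j2 -> admissible w -> final w ->
     all is_plain tau' -> j1 != j2' -> admissible w' -> final w' ->
     Nw w j2 = Nw w' j2' -> word_equiv w w')
  /\
  (* (4) existence *)
  (forall (N : 'rV[int]_2) (j1 : 'I_2),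
     (forall c : 'I_2, 0 <= N 0 c) -> coprimez (N 0 0) (N 0 1) ->
     N != eT j1 ->
     exists (tau : word) (j2 : 'I_2) (k : nat),
       let w := normal_form tau j1 j2 k in
       all is_plain tau /\ j1 != j2 /\ admissible w /\ final w /\ Nw w j2 = N).
Proof.
split; first exact: part1.
split; first by move=> tau j1 j2 k w Ht ne _ _; exact: part2.
split; first exact: part3.
exact: part4.
Qed.
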